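(* Let $S$ be a Strassen preordered semiring. Then for nonzero $x, y \in S$, the following are equivalent: (1) $f(x) \geq f(y)$ for every monotone semiring homomorphism $f : S \to \mathbb{R}_+$. (2) For every $\varepsilon > 0$, there are $m, n \in \mathbb{N}_{>0}$ and nonzero $z \in S$ such that $m \leq \varepsilon n$ and $n\, z\, x + m\, z \geq n\, z\, y$. (3) For every $\varepsilon > 0$, there are $m, n \in \mathbb{N}_{>0}$ and nonzero $z \in S$ such that $\frac{m}{n} \leq 1 + \varepsilon$ and $m\, z\, x \geq n\, z\, y$. (4) For every $\varepsilon > 0$, there are $k, n \in \mathbb{N}_{>0}$ such that $k \leq \varepsilon n$ and $2^k x^n \geq y^n$. Moreover, if $f(x) > f(y)$ for every monotone semiring homomorphism $f : S \to \mathbb{R}_+$, then there are nonzero $z, w \in S$ with $zx + w \geq zy + w$.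
   Context: A semiring is a set with two commutative monoid structures, addition (neutral element $0$) and multiplication (neutral element $1$), with multiplication distributing over addition; a semiring homomorphism preserves $+$, $\cdot$, $0$ and $1$. A preordered semiring is a semiring $S$ with a preorder $\geq$ such that $x \geq y$ implies $x + z \geq y + z$ and $xz \geq yz$ for all $z \in S$. A semiring homomorphism between preordered semirings is monotone if it preserves the preorder; $\mathbb{R}_+$ carries its usual order. A preordered semiring $S$ with $1 \geq 0$ is Strassen preordered if the unique homomorphism $\mathbb{N} \to S$ is an order embedding (i.e. for $a,b\in\mathbb{N}$, $a \geq b$ in $S$ iff $a \geq b$ in $\mathbb{N}$), and for every nonzero $x \in S$ there is $\ell \in \mathbb{N}$ with $\ell x \geq 1$ and $\ell \geq x$. $\mathbb{N}_{>0}$ denotes the positive integers. *)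

(* Defs.v *)
From HB Require Import structures.
From mathcomp Require Import all_boot all_order all_algebra.
From mathcomp Require Export Rstruct.
Set Implicit Arguments. Unset Strict Implicit. Unset Printing Implicit Defensive.
Import Order.TTheory GRing.Theory Num.Theory.
Local Open Scope ring_scope.

Definition preordered_semiring (S : comPzSemiRingType) (ge : S -> S -> Prop) : Prop :=
  [/\ (forall x, ge x x),
      (forall x y z, ge x y -> ge y z -> ge x z),
      (forall x y z, ge x y -> ge (x + z) (y + z)) &
      (forall x y z, ge x y -> ge (x * z) (y * z))].

Definition strassen_preordered (S : comPzSemiRingType) (ge : S -> S -> Prop) : Prop :=
  [/\ preordered_semiring ge,
      ge 1 0,
      (forall a b : nat, ge a%:R b%:R <-> (b <= a)%N) &
      (forall x : S, x != 0 -> exists l : nat, ge (x *+ l) 1 /\ ge l%:R x)].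

Definition monotone_hom (S : comPzSemiRingType) (ge : S -> S -> Prop)
    (f : S -> Rdefinitions.R) : Prop :=
  (forall x, 0 <= f x) /\
  (forall x y, f (x + y) = f x + f y) /\
  (forall x y, f (x * y) = f x * f y) /\
  f 0 = 0 /\ f 1 = 1 /\
  (forall x y, ge x y -> f y <= f x).

(* Main.v *)
Require Import Defs.
From HB Require Import structures.
From mathcomp Require Import all_boot all_order all_algebra.
From mathcomp Require Import Rstruct.
From mathcomp Require Import boolp classical_sets reals.
From mathcomp Require Import lra ring zify.
Import Order.TTheory GRing.Theory Num.Theory.
Local Open Scope ring_scope.

Notation RR := Rdefinitions.R.

Lemma density (a b : RR) : a < b -> 0 < b ->
  exists p q : nat, (0 < q)%N /\ a < p%:R / q%:R < b.
Proof.
move=> hab hb.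
have [ha|ha] := ltP a 0.
  by exists 0%N, 1%N; split => //; rewrite mul0r ha hb.
set q := (Num.Def.trunc ((b - a)^-1)).+1.
have hba : 0 < b - a by rewrite subr_gt0.
have hq1 : (b - a)^-1 < q%:R by apply: truncnS_gt.
have hq0 : (0 < q)%N by [].
have hqR : (0 : RR) < q%:R by rewrite ltr0n.
have hq2 : 1 < q%:R * (b - a).
  by rewrite -ltr_pdivrMr // div1r.
set p := (Num.Def.trunc (a * q%:R)).+1.
have hp1 : a * q%:R < p%:R by apply: truncnS_gt.
have hp2 : (p%:R : RR) <= a * q%:R + 1.
  rewrite /p -addn1 natrD lerD2r truncn_le; exact: mulr_ge0.
exists p, q; split => //; apply/andP; split.
  by rewrite ltr_pdivlMr.
rewrite ltr_pdivrMr //; apply: (le_lt_trans hp2); nra.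
Qed.

Lemma nat_big (c : RR) : exists N : nat, (0 < N)%N /\ c < N%:R.
Proof. by exists (Num.Def.trunc c).+1; split => //; apply: truncnS_gt. Qed.

Lemma bern_up (t : RR) b : 0 <= t -> (1 + t) ^+ b * (1 - b%:R * t) <= 1.
Proof.
move=> ht; elim: b => [|b IH]; first by rewrite expr0 mul0r subr0 mul1r.
have hp : 0 <= (1 + t) ^+ b by apply: exprn_ge0; lra.
have h1 : (1 + t) * (1 - b.+1%:R * t) <= 1 - b%:R * t.
  rewrite -natr1; have hb : (0 : RR) <= b%:R by []. nra.
rewrite exprSr -mulrA; apply: le_trans IH; exact: ler_wpM2l.
Qed.

Lemma bern_lo (t : RR) b : 0 <= t -> 1 + b%:R * t <= (1 + t) ^+ b.
Proof.
move=> ht; elim: b => [|b IH]; first by rewrite expr0 mul0r addr0.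
have hb : (0 : RR) <= b%:R by [].
rewrite exprSr -natr1; nra.
Qed.

Lemma pow_half b : (0 < b)%N -> (1 + 1 / (2 * b%:R)) ^+ b <= 2 :> RR.
Proof.
move=> hb; have hbR : (0 : RR) < b%:R by rewrite ltr0n.
have ht : (0 : RR) <= 1 / (2 * b%:R) by rewrite divr_ge0 // mulr_ge0 // ltW.
have := bern_up (1 / (2 * b%:R)) b ht.
have -> : 1 - b%:R * (1 / (2 * b%:R)) = 1 / 2 :> RR by field; rewrite gt_eqF.
lra.
Qed.

Lemma ratD (p q p' q' : nat) : (0 < q)%N -> (0 < q')%N ->
  (p * q' + p' * q)%:R / (q * q')%:R = p%:R / q%:R + p'%:R / q'%:R :> RR.
Proof.
move=> hq hq'; have h1 : (q%:R : RR) != 0 by rewrite pnatr_eq0 -lt0n.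
have h2 : (q'%:R : RR) != 0 by rewrite pnatr_eq0 -lt0n.
rewrite !natrD !natrM; field; apply/andP; split => //.
Qed.

Lemma ratM (p q p' q' : nat) : (0 < q)%N -> (0 < q')%N ->
  (p * p')%:R / (q * q')%:R = p%:R / q%:R * (p'%:R / q'%:R) :> RR.
Proof.
move=> hq hq'; have h1 : (q%:R : RR) != 0 by rewrite pnatr_eq0 -lt0n.
have h2 : (q'%:R : RR) != 0 by rewrite pnatr_eq0 -lt0n.
rewrite !natrM; field; apply/andP; split => //.
Qed.

Section Basics.
Variable S : comPzSemiRingType.
Variable ge : S -> S -> Prop.
Hypothesis HS : strassen_preordered ge.

Lemma geR u : ge u u.
Proof. by case: HS => -[]. Qed.
Lemma geT {u v w} : ge u v -> ge v w -> ge u w.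
Proof. by case: HS => -[] _ H _ _ _ _ _; apply: H. Qed.
Lemma geDr {u v} c : ge u v -> ge (u + c) (v + c).
Proof. by case: HS => -[] _ _ H _ _ _ _; apply: H. Qed.
Lemma geMr {u v} c : ge u v -> ge (u * c) (v * c).
Proof. by case: HS => -[] _ _ _ H _ _ _; apply: H. Qed.
Lemma geDl {u v} c : ge u v -> ge (c + u) (c + v).
Proof. by move=> h; rewrite ![c + _]addrC; apply: geDr. Qed.
Lemma geMl {u v} c : ge u v -> ge (c * u) (c * v).
Proof. by move=> h; rewrite ![c * _]mulrC; apply: geMr. Qed.
Lemma geD2 a b c d : ge a b -> ge c d -> ge (a + c) (b + d).
Proof. by move=> h1 h2; apply: geT (geDr _ h1) (geDl _ h2). Qed.
Lemma ge0 u : ge u 0.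
Proof. by case: HS => _ h10 _ _; have := geMr u h10; rewrite mul1r mul0r. Qed.
Lemma ge_nat a b : ge a%:R b%:R <-> (b <= a)%N.
Proof. by case: HS => _ _ H _; apply: H. Qed.
Lemma ge_arch {u : S} : u != 0 -> exists l : nat, ge (u *+ l) 1 /\ ge l%:R u.
Proof. by case: HS => _ _ _ H; apply: H. Qed.
Lemma ge_ub (u : S) : exists l : nat, ge l%:R u.
Proof.
have [->|/ge_arch [l [_ h]]] := eqVneq u 0; last by exists l.
by exists 0%N; apply: geR.
Qed.
Lemma ge01 : ~ ge 0 1.
Proof. by move=> h; have := proj1 (ge_nat 0 1); rewrite mulr0n mulr1n => /(_ h). Qed.
Lemma ge0n {u : S} : u != 0 -> ~ ge 0 u.
Proof.
move=> /ge_arch [l [h1 _]] h; apply: ge01; apply: geT h1.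
by have := geMr (l%:R : S) h; rewrite mul0r mulr_natr.
Qed.
Lemma mul_neq0 {u v : S} : u != 0 -> v != 0 -> u * v != 0.
Proof.
move=> /ge_arch [l [h1 _]] /ge_arch [l' [h2 _]]; apply/negP => /eqP h.
apply: ge01; have := geT (geMr (v *+ l') h1) (geMl 1 h2).
rewrite mulr1 mulrnAl mulrnAr -mulrnA h mul0rn; apply.
Qed.
Lemma add_neq0 {u : S} (v : S) : u != 0 -> u + v != 0.
Proof.
move=> hu; apply/negP => /eqP h; have := ge0n hu; apply.
by rewrite -h -{2}[u]addr0; apply: geDl; apply: ge0.
Qed.
Lemma nat_neq0 n : (0 < n)%N -> n%:R != 0 :> S.
Proof.
move=> hn; apply/negP => /eqP h; have : ge 0%:R n%:R by rewrite h; apply: geR.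
by move/ge_nat; rewrite leqn0 => /eqP h0; rewrite h0 in hn.
Qed.
Lemma ge_w (w : S) {z : S} : z != 0 -> ~ ge w (z + w).
Proof.
move=> hz h.
have hk : forall k, ge w (z *+ k + w).
  elim=> [|k IH]; first by rewrite mulr0n add0r; apply: geR.
  apply: geT IH _; rewrite mulrSr -addrA; apply: geDl; exact: h.
have [lw hw] := ge_ub w; have [lz [hz1 _]] := ge_arch hz.
have := hk (lz * lw.+1)%N; rewrite mulrnA => h2.
have h3 : ge (z *+ lz *+ lw.+1) (lw.+1)%:R.
  by have := geMr (lw.+1)%:R hz1; rewrite mul1r mulr_natr.
have h4 : ge (z *+ lz *+ lw.+1 + w) (z *+ lz *+ lw.+1).
  by rewrite -{2}[z *+ lz *+ lw.+1]addr0; apply: geDl; apply: ge0.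
have /ge_nat := geT hw (geT h2 (geT h4 h3)).
by rewrite ltnn.
Qed.


Lemma geE {a b a' b' : S} : a = a' -> b = b' -> ge a b -> ge a' b'.
Proof. by move=> -> ->. Qed.
Lemma PE (P : S -> S -> Prop) {a b a' b' : S} : a = a' -> b = b' -> P a b -> P a' b'.
Proof. by move=> -> ->. Qed.

Record good (P : S -> S -> Prop) : Prop := Good {
  good_T : forall u v w, P u v -> P v w -> P u w;
  good_D : forall u v c, P u v -> P (u + c) (v + c);
  good_M : forall u v c, P u v -> P (u * c) (v * c);
  good_sub : forall u v, ge u v -> P u v;
  good_canc : forall z w u v, z != 0 -> P (z * u + w) (z * v + w) -> P u v;
  good_prop : ~ P 0 1 }.

Lemma one_neq0 : (1 : S) != 0.
Proof. by have := @nat_neq0 1 isT; rewrite mulr1n. Qed.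

Section Good.
Context {P : S -> S -> Prop} (hP : good P).
Lemma gT {u v w} : P u v -> P v w -> P u w.
Proof. by apply: (@good_T P hP). Qed.
Lemma gDr {u v} c : P u v -> P (u + c) (v + c).
Proof. by apply: (@good_D P hP). Qed.
Lemma gMr {u v} c : P u v -> P (u * c) (v * c).
Proof. by apply: (@good_M P hP). Qed.
Lemma gsub {u v} : ge u v -> P u v.
Proof. by apply: (@good_sub P hP). Qed.
Lemma gcanc {z} w {u v} : z != 0 -> P (z * u + w) (z * v + w) -> P u v.
Proof. by apply: (@good_canc P hP). Qed.
Lemma gprop : ~ P 0 1.
Proof. by apply: (@good_prop P hP). Qed.
Lemma gR u : P u u.
Proof. exact/gsub/geR. Qed.
Lemma gDl {u v} c : P u v -> P (c + u) (c + v).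
Proof. by move=> h; rewrite ![c + _]addrC; apply: gDr. Qed.
Lemma gMl {u v} c : P u v -> P (c * u) (c * v).
Proof. by move=> h; rewrite ![c * _]mulrC; apply: gMr. Qed.
Lemma gD2 {a b c d} : P a b -> P c d -> P (a + c) (b + d).
Proof. by move=> h1 h2; apply: gT (gDr _ h1) (gDl _ h2). Qed.
Lemma gMn {u v} n : P u v -> P (u *+ n) (v *+ n).
Proof. by move=> h; rewrite -[u *+ n]mulr_natr -[v *+ n]mulr_natr; apply: gMr. Qed.
Lemma gcancD w {u v} : P (u + w) (v + w) -> P u v.
Proof. by move=> h; apply: (@gcanc 1 w); [exact: one_neq0 | rewrite !mul1r]. Qed.

Lemma gcancM {z u v} : z != 0 -> P (z * u) (z * v) -> P u v.
Proof. by move=> hz h; apply: (gcanc 0 hz); rewrite !addr0. Qed.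
Lemma g0n {c} : c != 0 -> ~ P 0 c.
Proof.
move=> /ge_arch [l [h1 _]] h; apply: gprop; apply: gT (gsub h1).
by have := gMn l h; rewrite mul0rn.
Qed.
Lemma gnat {a b : nat} : P a%:R b%:R -> (b <= a)%N.
Proof.
move=> h; rewrite leqNgt; apply/negP => hab.
have h2 : P a%:R (a.+1)%:R by apply: gT h (gsub _); apply/ge_nat.
apply: gprop; apply: (gcancD a%:R); by rewrite add0r -mulrS.
Qed.
Lemma gdrop {p q r} : P p (q + r) -> P p q.
Proof.
move=> h; apply: gT h (gsub _); rewrite -{2}[q]addr0; apply: geDl; exact: ge0.
Qed.
End Good.


Definition Ccl (u v : S) := exists z w, z != 0 /\ ge (z * u + w) (z * v + w).

Lemma Ccl_good : good Ccl.
Proof.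
constructor.
- move=> u v t [z [w [hz h1]]] [z' [w' [hz' h2]]].
  exists (z * z'), (z' * w + z * w'); split; first exact: mul_neq0.
  have s1 := geDr (z * w') (geMr z' h1).
  have s2 := geDr (z' * w) (geMr z h2).
  have e : (z * v + w) * z' + z * w' = (z' * v + w') * z + z' * w by ring.
  rewrite e in s1; apply: (geE _ _ (geT s1 s2)); ring.
- move=> u v c [z [w [hz h]]]; exists z, w; split => //.
  apply: (geE _ _ (geDr (z * c) h)); ring.
- move=> u v c [z [w [hz h]]]; exists z, (w * c); split => //.
  apply: (geE _ _ (geMr c h)); ring.
- move=> u v h; exists 1, 0; split; first exact: one_neq0.
  by rewrite !mul1r !addr0.
- move=> z0 w0 u v hz0 [z [w [hz h]]]; exists (z * z0), (z * w0 + w); split.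
    exact: mul_neq0.
  apply: (geE _ _ h); ring.
- move=> [z [w [hz h]]]; apply: (ge_w w hz); apply: (geE _ _ h); ring.
Qed.

Definition Ext (M : S -> S -> Prop) (a b : S) (u v : S) :=
  exists z s, z != 0 /\ M (z * u + s * a) (z * v + s * b).
Section Ext.
Context {M : S -> S -> Prop} (hM : good M).

Lemma Ext_T a b u v t : Ext M a b u v -> Ext M a b v t -> Ext M a b u t.
Proof.
move=> [z [s [hz h1]]] [z' [s' [hz' h2]]].
exists (z * z'), (s * z' + z * s'); split; first exact: mul_neq0.
have s1 := gDr hM (z * s' * a) (gMr hM z' h1).
have s2 := gDr hM (z' * s * b) (gMr hM z h2).
have e : (z * v + s * b) * z' + z * s' * a = (z' * v + s' * a) * z + z' * s * b by ring.
rewrite e in s1; apply: (PE _ _ _ (gT hM s1 s2)); ring.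
Qed.

Lemma Ext_good_or a b : good (Ext M a b) \/ Ext M a b 0 1.
Proof.
have [h01|h01] := pselect (Ext M a b 0 1); [by right | left].
constructor => //.
- by move=> u v t; apply: Ext_T.
- move=> u v c [z [s [hz h1]]]; exists z, s; split => //.
  apply: (PE _ _ _ (gDr hM (z * c) h1)); ring.
- move=> u v c [z [s [hz h1]]]; exists z, (s * c); split => //.
  apply: (PE _ _ _ (gMr hM c h1)); ring.
- move=> u v h; exists 1, 0; split; first exact: one_neq0.
  rewrite !mul0r !addr0 !mul1r; exact: gsub.
- move=> z0 w0 u v hz0 [z [s [hz h1]]]; exists (z * z0), s; split.
    exact: mul_neq0.
  apply: (gcancD hM (z * w0)); apply: (PE _ _ _ h1); ring.
Qed.

Lemma Ext_sub a b u v : M u v -> Ext M a b u v.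
Proof.
move=> h; exists 1, 0; split; first exact: one_neq0.
by rewrite !mul0r !addr0 !mul1r.
Qed.

Lemma Ext_ba a b : Ext M a b b a.
Proof.
exists 1, 1; split; first exact: one_neq0.
rewrite !mul1r addrC; exact: gR.
Qed.

Lemma combine {a b z s z' t u v u' v' : S} :
  M (z * u + s * a) (z * v + s * b) -> M (z' * u' + t * b) (z' * v' + t * a) ->
  M (t * z * u + s * z' * u') (t * z * v + s * z' * v').
Proof.
move=> h1 h2; have h := gD2 hM (gMr hM t h1) (gMr hM s h2).
apply: (gcancD hM (s * t * a + s * t * b)); apply: (PE _ _ _ h); ring.
Qed.

Lemma s_neq0 {a b z s u v : S} : ~ M u v -> z != 0 ->
  M (z * u + s * a) (z * v + s * b) -> s != 0.
Proof.
move=> nuv hz h; apply/negP => /eqP s0; apply: nuv; apply: (gcancM hM hz).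
by move: h; rewrite s0 !mul0r !addr0.
Qed.
End Ext.

Lemma maximal_exists X Y : ~ Ccl X Y ->
  exists M, [/\ good M, ~ M X Y & forall a b, M a b \/ M b a].
Proof.
move=> hXY.
pose T := {P : S -> S -> Prop | good P /\ ~ P X Y}.
have t0 : T := exist _ Ccl (conj Ccl_good hXY).
pose R := fun (p q : T) => `[< forall u v, sval p u v -> sval q u v >].
have [m hm] : exists t, premaximal (fun x y => R x y) t.
  apply: (ZL_preorder t0).
  - by move=> t; apply/asboolP.
  - by move=> p q r /asboolP h1 /asboolP h2; apply/asboolP => u v /h1 /h2.
  move=> A Atot.
  have [[p0 Ap0]|nA] := pselect (exists t, A t); last first.
    by exists t0 => s As; exfalso; apply: nA; exists s.
  pose U u v := exists p, A p /\ sval p u v.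
  have gU : good U.
    constructor.
    + move=> u v w [p [Ap h1]] [q [Aq h2]].
      have [/asboolP Rpq|/asboolP Rqp] := Atot p q Ap Aq.
        exists q; split => //; apply: (gT (proj1 (svalP q)) (Rpq _ _ h1) h2).
      exists p; split => //; apply: (gT (proj1 (svalP p)) h1 (Rqp _ _ h2)).
    + move=> u v c [p [Ap h]]; exists p; split => //.
      exact: (gDr (proj1 (svalP p))).
    + move=> u v c [p [Ap h]]; exists p; split => //.
      exact: (gMr (proj1 (svalP p))).
    + move=> u v h; exists p0; split => //; exact: (gsub (proj1 (svalP p0))).
    + move=> z w u v hz [p [Ap h]]; exists p; split => //.
      exact: (gcanc (proj1 (svalP p)) w hz).
    + by move=> [p [Ap h]]; apply: (gprop (proj1 (svalP p))).
  have nU : ~ U X Y by move=> [p [Ap h]]; apply: (proj2 (svalP p)).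
  exists (exist _ U (conj gU nU)) => s As; apply/asboolP => u v h.
  by exists s.
case: m hm => M [gM nM] hm.
exists M; split => // a b.
have key : forall a b, ~ M b a -> Ext M a b 0 1 \/ Ext M a b X Y.
  move=> a' b' nba.
  have [g|h01] := Ext_good_or gM a' b'; last by left.
  have [hxy|nxy] := pselect (Ext M a' b' X Y); first by right.
  exfalso; apply: nba.
  have := hm (exist _ (Ext M a' b') (conj g nxy)).
  move=> /(_ (asboolT (fun u v (h : M u v) => Ext_sub a' b' u v h))) /asboolP /= H.
  by apply: H; apply: Ext_ba.
have [hab|nab] := pselect (M a b); first by left.
have [hba|nba] := pselect (M b a); first by right.
exfalso.
have nM01 : ~ M 0 1 by apply: (gprop gM).
have E1 := key a b nba; have E2 := key b a nab.
have H : forall u v u' v', ~ M u v -> ~ M u' v' ->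
    Ext M a b u v -> Ext M b a u' v' ->
    exists c1 c2, [/\ c1 != 0, c2 != 0 & M (c1 * u + c2 * u') (c1 * v + c2 * v')].
  move=> u v u' v' nuv nuv' [z [s [hz h1]]] [z' [t [hz' h2]]].
  have hs := s_neq0 gM nuv hz h1; have ht := s_neq0 gM nuv' hz' h2.
  exists (t * z), (s * z'); split; try exact: mul_neq0.
  exact: (combine gM h1 h2).
case: E1 => E1; case: E2 => E2.
- have [c1 [c2 [h1 h2 h]]] := H _ _ _ _ nM01 nM01 E1 E2.
  move: h; rewrite !mulr0 !mulr1 addr0; exact: (g0n gM (add_neq0 _ h1)).
- have [c1 [c2 [h1 h2 h]]] := H _ _ _ _ nM01 nM E1 E2.
  move: h; rewrite !mulr0 !mulr1 add0r addrC => /(gdrop gM) /(gcancM gM h2).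
  exact: nM.
- have [c1 [c2 [h1 h2 h]]] := H _ _ _ _ nM nM01 E1 E2.
  move: h; rewrite !mulr0 !mulr1 addr0 => /(gdrop gM) /(gcancM gM h1).
  exact: nM.
- have [c1 [c2 [h1 h2 h]]] := H _ _ _ _ nM nM E1 E2.
  move: h; rewrite -!mulrDl => /(gcancM gM (add_neq0 _ h1)).
  exact: nM.
Qed.

Section Hom.
Context {M : S -> S -> Prop} (hM : good M) (tot : forall a b, M a b \/ M b a).

Definition lset (u : S) : set RR :=
  [set r | exists p q : nat, [/\ (0 < q)%N, r = p%:R / q%:R & M (u *+ q) p%:R]].
Definition fM (u : S) : RR := sup (lset u).

Lemma natmulE (p q : nat) : (p%:R : S) *+ q = (p * q)%:R.
Proof. by rewrite mulrnA. Qed.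

Lemma cutM {u p q p' q'} : M (u *+ q) p%:R -> M p'%:R (u *+ q') ->
  (p * q' <= p' * q)%N.
Proof.
move=> h1 h2; apply: (gnat hM).
have h1' := gMn hM q' h1; have h2' := gMn hM q h2.
rewrite -mulrnA natmulE in h1'; rewrite natmulE -mulrnA [(q' * q)%N]mulnC in h2'.
apply: (gT hM h2'); exact: h1'.
Qed.

Lemma lset0 u : lset u 0.
Proof.
exists 0%N, 1%N; split => //; first by rewrite mul0r.
by apply: (gsub hM); apply: ge0.
Qed.

Lemma lset_ub u : has_ubound (lset u).
Proof.
have [l hl] := ge_ub u; exists l%:R => r [p [q [hq -> h]]].
have h2 : M (l%:R *+ q) (u *+ q) by apply: (gMn hM); apply: (gsub hM).
have := gnat hM (gT hM (PE _ (natmulE l q) erefl h2) h).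
by rewrite ler_pdivrMr ?ltr0n // -natrM ler_nat.
Qed.

Lemma lo_le {u p q} : (0 < q)%N -> M (u *+ q) p%:R -> p%:R / q%:R <= fM u.
Proof. by move=> hq h; apply: (ub_le_sup (lset_ub u)); exists p, q. Qed.

Lemma hi_ge {u p q} : (0 < q)%N -> M p%:R (u *+ q) -> fM u <= p%:R / q%:R.
Proof.
move=> hq h; apply: ge_sup; first by exists 0; apply: lset0.
move=> r [p' [q' [hq' -> h']]].
have := cutM h' h; rewrite -(ler_nat RR) !natrM => hc.
rewrite ler_pdivrMr ?ltr0n // mulrAC ler_pdivlMr ?ltr0n //.
Qed.

Lemma lt_lo {u p q} : (0 < q)%N -> p%:R / q%:R < fM u -> M (u *+ q) p%:R.
Proof.
move=> hq hlt; have [//|h] := tot (u *+ q) p%:R.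
by have := hi_ge hq h; rewrite leNgt hlt.
Qed.

Lemma gt_hi {u p q} : (0 < q)%N -> fM u < p%:R / q%:R -> M p%:R (u *+ q).
Proof.
move=> hq hlt; have [h|//] := tot (u *+ q) p%:R.
by have := lo_le hq h; rewrite leNgt hlt.
Qed.

Lemma fM_ge0 u : 0 <= fM u.
Proof. exact: (ub_le_sup (lset_ub u) (lset0 u)). Qed.

Lemma fM_mono {u v} : M u v -> fM v <= fM u.
Proof.
move=> h; apply: ge_sup; first by exists 0; apply: lset0.
move=> r [p [q [hq -> h']]]; apply: (lo_le hq).
apply: (gT hM (gMn hM q h)); exact: h'.
Qed.

Lemma lo_add {u v p q p' q'} : M (u *+ q) p%:R -> M (v *+ q') p'%:R ->
  M ((u + v) *+ (q * q')) (p * q' + p' * q)%:R.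
Proof.
move=> h1 h2; have h := gD2 hM (gMn hM q' h1) (gMn hM q h2).
apply: (PE _ _ _ h); first by rewrite mulrnDl mulrnA [(q * q')%N]mulnC mulrnA.
by rewrite !natmulE natrD.
Qed.

Lemma hi_add {u v p q p' q'} : M p%:R (u *+ q) -> M p'%:R (v *+ q') ->
  M (p * q' + p' * q)%:R ((u + v) *+ (q * q')).
Proof.
move=> h1 h2; have h := gD2 hM (gMn hM q' h1) (gMn hM q h2).
apply: (PE _ _ _ h); last by rewrite mulrnDl mulrnA [(q * q')%N]mulnC mulrnA.
by rewrite !natmulE natrD.
Qed.

Lemma lo_mul {u v p q p' q'} : M (u *+ q) p%:R -> M (v *+ q') p'%:R ->
  M ((u * v) *+ (q * q')) (p * p')%:R.
Proof.
move=> h1 h2; have h := gT hM (gMr hM (v *+ q') h1) (gMl hM p%:R h2).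
apply: (PE _ _ _ h); first by rewrite mulrnAl mulrnAr -mulrnA mulnC.
by rewrite natrM.
Qed.

Lemma hi_mul {u v p q p' q'} : M p%:R (u *+ q) -> M p'%:R (v *+ q') ->
  M (p * p')%:R ((u * v) *+ (q * q')).
Proof.
move=> h1 h2; have h := gT hM (gMr hM p'%:R h1) (gMl hM (u *+ q) h2).
apply: (PE _ _ _ h); last by rewrite mulrnAl mulrnAr -mulrnA mulnC.
by rewrite natrM.
Qed.

Lemma fM_add u v : fM (u + v) = fM u + fM v.
Proof.
apply/eqP; rewrite eq_le; apply/andP; split.
- rewrite leNgt; apply/negP => hlt.
  have h0u := fM_ge0 u; have h0v := fM_ge0 v.
  have [p1 [q1 [hq1 /andP[l1 r1]]]] :=
    density (fM u) (fM u + (fM (u + v) - fM u - fM v) / 2)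
      ltac:(lra) ltac:(lra).
  have [p2 [q2 [hq2 /andP[l2 r2]]]] :=
    density (fM v) (fM v + (fM (u + v) - fM u - fM v) / 2)
      ltac:(lra) ltac:(lra).
  have h1 := gt_hi hq1 l1; have h2 := gt_hi hq2 l2.
  have hq : (0 < q1 * q2)%N by rewrite muln_gt0 hq1 hq2.
  have := hi_ge hq (hi_add h1 h2); rewrite ratD // => hle.
  lra.
- have key : forall r1 r2, lset u r1 -> lset v r2 -> r1 + r2 <= fM (u + v).
    move=> _ _ [p [q [hq -> h1]]] [p' [q' [hq' -> h2]]]; rewrite -ratD //.
    apply: lo_le; [by rewrite muln_gt0 hq hq' | exact: lo_add h1 h2].
  have k2 : forall r2, lset v r2 -> fM u <= fM (u + v) - r2.
    move=> r2 hr2; apply: ge_sup; first by exists 0; apply: lset0.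
    move=> r1 hr1; have := key _ _ hr1 hr2; lra.
  have k3 : fM v <= fM (u + v) - fM u.
    apply: ge_sup; first by exists 0; apply: lset0.
    move=> r2 hr2; have := k2 _ hr2; lra.
  lra.
Qed.
Lemma fM_mul u v : fM (u * v) = fM u * fM v.
Proof.
have h0u := fM_ge0 u; have h0v := fM_ge0 v; have h0uv := fM_ge0 (u * v).
apply/eqP; rewrite eq_le; apply/andP; split.
- rewrite leNgt; apply/negP => hlt.
  set e := (fM (u * v) - fM u * fM v) / (fM v + 1).
  have hv1 : 0 < fM v + 1 by lra.
  have he : 0 < e by rewrite /e divr_gt0 // subr_gt0.
  have he2 : e * (fM v + 1) = fM (u * v) - fM u * fM v.
    by rewrite /e mulfVK // gt_eqF.
  have [p1 [q1 [hq1 /andP[l1 r1]]]] := density (fM u) (fM u + e) ltac:(lra) ltac:(lra).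
  set x1 := p1%:R / q1%:R in l1 r1.
  have hx1 : 0 < x1 by lra.
  have hx1v : x1 * fM v < fM (u * v).
    have : x1 * fM v <= (fM u + e) * fM v by apply: ler_wpM2r => //; lra.
    nra.
  have huv : 0 < fM (u * v) by nra.
  have [p2 [q2 [hq2 /andP[l2 r2]]]] :=
    density (fM v) (fM (u * v) / x1) ltac:(by rewrite ltr_pdivlMr // mulrC)
      ltac:(by rewrite divr_gt0).
  set x2 := p2%:R / q2%:R in l2 r2.
  have h1 := gt_hi hq1 l1; have h2 := gt_hi hq2 l2.
  have hq : (0 < q1 * q2)%N by rewrite muln_gt0 hq1 hq2.
  have := hi_ge hq (hi_mul h1 h2); rewrite ratM // -/x1 -/x2 => hle.
  move: r2; rewrite ltr_pdivlMr // => r2.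
  lra.
- rewrite leNgt; apply/negP => hlt.
  have hu : 0 < fM u by nra.
  have hv : 0 < fM v by nra.
  have [p1 [q1 [hq1 /andP[l1 r1]]]] :=
    density (fM (u * v) / fM v) (fM u) ltac:(by rewrite ltr_pdivrMr) hu.
  set x1 := p1%:R / q1%:R in l1 r1.
  have hx1 : 0 < x1 by apply: le_lt_trans l1; rewrite divr_ge0.
  move: l1; rewrite ltr_pdivrMr // => l1.
  have [p2 [q2 [hq2 /andP[l2 r2]]]] :=
    density (fM (u * v) / x1) (fM v) ltac:(rewrite ltr_pdivrMr //; lra) hv.
  set x2 := p2%:R / q2%:R in l2 r2.
  have h1 := lt_lo hq1 r1; have h2 := lt_lo hq2 r2.
  have hq : (0 < q1 * q2)%N by rewrite muln_gt0 hq1 hq2.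
  have := lo_le hq (lo_mul h1 h2); rewrite ratM // -/x1 -/x2 => hle.
  move: l2; rewrite ltr_pdivrMr // => l2.
  lra.
Qed.

Lemma fM0 : fM 0 = 0.
Proof.
apply/eqP; rewrite eq_le fM_ge0 andbT.
have h : M (0%:R : S) ((0 : S) *+ 1) by rewrite mulr0n mulr1n; apply: (gR hM).
by have := @hi_ge 0 0 1 isT h; rewrite mul0r.
Qed.

Lemma fM1 : fM 1 = 1.
Proof.
apply/eqP; rewrite eq_le.
have h := gR hM (1 : S).
have := @hi_ge 1 1 1 isT; have := @lo_le 1 1 1 isT.
rewrite mulr1n divr1 => ha hb; rewrite ha ?hb //.
Qed.

Lemma fM_hom : monotone_hom ge fM.
Proof.
split; first exact: fM_ge0.
split; first exact: fM_add.
split; first exact: fM_mul.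
split; first exact: fM0.
split; first exact: fM1.
by move=> u v h; apply: fM_mono; apply: (gsub hM).
Qed.

End Hom.

Lemma core {X Y : S} : ~ Ccl X Y -> exists f, monotone_hom ge f /\ f X <= f Y.
Proof.
move=> h; have [M [gM nM tot]] := maximal_exists _ _ h.
exists (@fM M); split; first exact: (fM_hom gM tot).
have [//|hYX] := tot X Y; exact: (fM_mono gM hYX).
Qed.

Section HomFacts.
Context {f : S -> RR} (hf : monotone_hom ge f).
Lemma hf_add u v : f (u + v) = f u + f v.
Proof. by case: hf => _ [h _]. Qed.
Lemma hf_mul u v : f (u * v) = f u * f v.
Proof. by case: hf => _ [_ [h _]]. Qed.
Lemma hf0 : f 0 = 0.
Proof. by case: hf => _ [_ [_ [h _]]]. Qed.
Lemma hf1 : f 1 = 1.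
Proof. by case: hf => _ [_ [_ [_ [h _]]]]. Qed.
Lemma hf_mono {u v} : ge u v -> f v <= f u.
Proof. by case: hf => _ [_ [_ [_ [_ h]]]]; apply: h. Qed.
Lemma hf_ge0 u : 0 <= f u.
Proof. by case: hf. Qed.
Lemma hf_natmul u n : f (u *+ n) = f u * n%:R.
Proof.
elim: n => [|n IH]; first by rewrite mulr0n hf0 mulr0.
by rewrite mulrS hf_add IH mulrS; ring.
Qed.
Lemma hf_nat n : f n%:R = n%:R.
Proof. by rewrite hf_natmul hf1 mul1r. Qed.
Lemma hf_exp u n : f (u ^+ n) = f u ^+ n.
Proof.
elim: n => [|n IH]; first by rewrite !expr0 hf1.
by rewrite !exprS hf_mul IH.
Qed.
Lemma hf_pos {u} : u != 0 -> 0 < f u.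
Proof.
move=> /ge_arch [l [h1 _]]; have := hf_mono h1; rewrite hf_natmul hf1 => h.
rewrite lt_neqAle hf_ge0 andbT; apply/negP => /eqP h0.
by move: h; rewrite -h0 mul0r ler10.
Qed.
End HomFacts.

Lemma rep_w {a b w : S} k : ge (a + w) (b + w) -> ge (a *+ k + w) (b *+ k + w).
Proof.
move=> h; elim: k => [|k IH]; first by rewrite !mulr0n; apply: geR.
have s1 := geDl a IH; have s2 := geDl (b *+ k) h.
have e : a + (b *+ k + w) = b *+ k + (a + w) by ring.
rewrite e in s1; have H := geT s1 s2; apply: (geE _ _ H); rewrite !mulrS; ring.
Qed.

Lemma P1_P2 (x y : S) : (forall f, monotone_hom ge f -> f y <= f x) ->
  forall eps : RR, 0 < eps ->
      exists m n : nat, exists z : S, [/\ (0 < m)%N, (0 < n)%N, z != 0,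
        m%:R <= eps * n%:R & ge ((z * x) *+ n + z *+ m) ((z * y) *+ n)].
Proof.
move=> P1 eps he.
have [N [hN0' hN]] := nat_big (2 / eps).
have hN2 : 2 <= eps * N%:R by move: hN; rewrite ltr_pdivrMr // mulrC => /ltW.
have hC : Ccl (x *+ N + 1) (y *+ N).
  have [//|nC] := pselect (Ccl (x *+ N + 1) (y *+ N)).
  have [f [hf hle]] := core nC.
  rewrite (hf_add hf) !(hf_natmul hf) (hf1 hf) in hle.
  have := P1 f hf => hyx.
  have hN0 : (0 : RR) < N%:R by rewrite ltr0n.
  have : f y * N%:R <= f x * N%:R by rewrite ler_wpM2r // ltW.
  move=> h2; have := le_trans hle h2; lra.

have [z [w [hz h]]] := hC.
have [lw hlw] := ge_ub w; have [lz [hlz _]] := ge_arch hz.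
set k := (lz * lw).+1.
have h1 := rep_w k h.
have h2 : ge ((z * (x *+ N + 1)) *+ k + lw%:R) ((z * (x *+ N + 1)) *+ k + w).
  exact: geDl.
have h3 : ge ((z * (y *+ N)) *+ k + w) ((z * (y *+ N)) *+ k).
  by rewrite -{2}[(z * (y *+ N)) *+ k]addr0; apply: geDl; apply: ge0.
have h4 : ge (z *+ (lz * lw)) lw%:R.
  by have := geMr (lw%:R) hlz; rewrite mul1r mulr_natr -mulrnA.
have H := geT (geDl ((z * (x *+ N + 1)) *+ k) h4) (geT h2 (geT h1 h3)).
exists (k + lz * lw)%N, (N * k)%N, z; split => //.
- by rewrite muln_gt0 hN0'.
- have hk : ((k + lz * lw)%:R : RR) <= 2 * k%:R.
    by rewrite -natrM ler_nat /k; lia.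
  rewrite natrM; apply: (le_trans hk); rewrite mulrA; apply: ler_wpM2r => //.
- apply: (geE _ _ H); ring.
Qed.

Lemma P2_P1 (x y : S) :
  (forall eps : RR, 0 < eps ->
      exists m n : nat, exists z : S, [/\ (0 < m)%N, (0 < n)%N, z != 0,
        m%:R <= eps * n%:R & ge ((z * x) *+ n + z *+ m) ((z * y) *+ n)]) ->
  forall f, monotone_hom ge f -> f y <= f x.
Proof.
move=> P2 f hf; rewrite leNgt; apply/negP => hlt.
have [m [n [z [hm hn hz hmn H]]]] := P2 ((f y - f x) / 2) ltac:(lra).
have := hf_mono hf H; rewrite (hf_add hf) !(hf_natmul hf) !(hf_mul hf) => Hf.
have hfz := hf_pos hf hz.
have H2 : f y * n%:R <= f x * n%:R + m%:R.
  have : f z * (f y * n%:R) <= f z * (f x * n%:R + m%:R) by nra.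
  by rewrite ler_pM2l.
have hn1 : (1 : RR) <= n%:R by rewrite ler1n.
nra.
Qed.

Lemma P2_P3 (x y : S) : x != 0 ->
  (forall eps : RR, 0 < eps ->
      exists m n : nat, exists z : S, [/\ (0 < m)%N, (0 < n)%N, z != 0,
        m%:R <= eps * n%:R & ge ((z * x) *+ n + z *+ m) ((z * y) *+ n)]) ->
  forall eps : RR, 0 < eps ->
      exists m n : nat, exists z : S, [/\ (0 < m)%N, (0 < n)%N, z != 0,
        m%:R / n%:R <= 1 + eps & ge ((z * x) *+ m) ((z * y) *+ n)].
Proof.
move=> hx P2 eps he.
have [lx [hlx _]] := ge_arch hx.
have hlx0 : (0 < lx)%N.
  rewrite lt0n; apply/negP => /eqP l0; move: hlx; rewrite l0 mulr0n; exact: ge01.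
have hlxR : (0 : RR) < lx%:R by rewrite ltr0n.
have [m [n [z [hm hn hz hmn H]]]] := P2 (eps / lx%:R) ltac:(by rewrite divr_gt0).
have H2 : ge ((z * x) *+ (m * lx)) (z *+ m).
  have := geMr (m%:R : S) (geMl z hlx).
  move=> HH; apply: (geE _ _ HH); ring.
have H3 := geT (geDl ((z * x) *+ n) H2) H.
exists (n + m * lx)%N, n, z; split => //.
- by rewrite addn_gt0 hn.
- have hnR : (0 : RR) < n%:R by rewrite ltr0n.
  rewrite ler_pdivrMr // natrD natrM.
  move: hmn; rewrite mulrAC ler_pdivlMr // => hmn.
  lra.
- apply: (geE _ _ H3) => //; rewrite mulrnDr //.
Qed.

Lemma P3_P1 (x y : S) : x != 0 ->
  (forall eps : RR, 0 < eps ->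
      exists m n : nat, exists z : S, [/\ (0 < m)%N, (0 < n)%N, z != 0,
        m%:R / n%:R <= 1 + eps & ge ((z * x) *+ m) ((z * y) *+ n)]) ->
  forall f, monotone_hom ge f -> f y <= f x.
Proof.
move=> hx P3 f hf; rewrite leNgt; apply/negP => hlt.
have hfx := hf_pos hf hx.
have he : 0 < (f y - f x) / (2 * f x).
  by rewrite divr_gt0 // ?subr_gt0 // mulr_gt0.
have [m [n [z [hm hn hz hmn H]]]] := P3 _ he.
have := hf_mono hf H; rewrite !(hf_natmul hf) !(hf_mul hf) => Hf.
have hfz := hf_pos hf hz.
have hnR : (0 : RR) < n%:R by rewrite ltr0n.
move: hmn; rewrite ler_pdivrMr // => hmn.
have e : f x * ((f y - f x) / (2 * f x)) = (f y - f x) / 2.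
  by field; rewrite gt_eqF.
have H2 : f y * n%:R <= f x * m%:R.
  have : f z * (f y * n%:R) <= f z * (f x * m%:R) by nra.
  by rewrite ler_pM2l.
have H3 : f x * m%:R <= f x * ((1 + (f y - f x) / (2 * f x)) * n%:R).
  by rewrite ler_pM2l.
have hn1 : (1 : RR) <= n%:R by rewrite ler1n.
nra.
Qed.

Lemma powcat {Z A B : S} j : ge (Z * A) (Z * B) -> ge (Z * A ^+ j) (Z * B ^+ j).
Proof.
move=> h; elim: j => [|j IH]; first by rewrite !expr0; apply: geR.
have s1 := geMl A IH; have s2 := geMl (B ^+ j) h.
have e : A * (Z * B ^+ j) = B ^+ j * (Z * A) by ring.
rewrite e in s1; have H := geT s1 s2; apply: (geE _ _ H); rewrite !exprSr; ring.
Qed.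

Lemma cancelZ {Z A B : S} : Z != 0 -> ge (Z * A) (Z * B) ->
  exists c : nat, forall j, ge (A ^+ j *+ c) (B ^+ j).
Proof.
move=> hZ hAB; have [lZ hlZ] := ge_ub Z; have [lZ' [hlZ' _]] := ge_arch hZ.
exists (lZ * lZ')%N => j; have h := powcat j hAB.
have s1 := geMr (A ^+ j *+ lZ') hlZ.
have s2 := geMr (lZ'%:R : S) h.
have s3 := geMr (B ^+ j) hlZ'.
have e1 : Z * (A ^+ j *+ lZ') = Z * A ^+ j * lZ'%:R by ring.
have e2 : Z * B ^+ j * lZ'%:R = Z *+ lZ' * B ^+ j by ring.
rewrite e1 in s1; rewrite e2 in s2.
have H := geT s1 (geT s2 s3); apply: (geE _ _ H); ring.
Qed.

Lemma P3_P4 (x y : S) :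
  (forall eps : RR, 0 < eps ->
      exists m n : nat, exists z : S, [/\ (0 < m)%N, (0 < n)%N, z != 0,
        m%:R / n%:R <= 1 + eps & ge ((z * x) *+ m) ((z * y) *+ n)]) ->
  forall eps : RR, 0 < eps ->
      exists k n : nat, [/\ (0 < k)%N, (0 < n)%N,
        k%:R <= eps * n%:R & ge ((x ^+ n) *+ (2 ^ k)) (y ^+ n)].
Proof.
move=> P3 eps he.
have [b [hb0 hb]] := nat_big (2 / eps).
have hb2 : 2 <= eps * b%:R by move: hb; rewrite ltr_pdivrMr // mulrC => /ltW.
have hbR : (0 : RR) < b%:R by rewrite ltr0n.
have ht : (0 : RR) < 1 / (2 * b%:R) by rewrite divr_gt0 // mulr_gt0.
have [m [n [z [hm hn hz hmn H]]]] := P3 _ ht.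
have hmb : (m ^ b <= 2 * n ^ b)%N.
  rewrite -(ler_nat RR) natrM !natrX.
  have hnR : (0 : RR) < n%:R by rewrite ltr0n.
  move: hmn; rewrite ler_pdivrMr // => hmn.
  have h1 : (m%:R : RR) ^+ b <= ((1 + 1 / (2 * b%:R)) * n%:R) ^+ b.
    apply: lerXn2r => //; rewrite nnegrE //; apply: mulr_ge0; [lra | exact: ltW].
  rewrite exprMn in h1; apply: (le_trans h1); apply: ler_wpM2r.
    by rewrite exprn_ge0 // ltW.
  exact: pow_half.
have H1 : ge (z * (x *+ m)) (z * (y *+ n)) by rewrite !mulrnAr.
have H2 := powcat b H1; rewrite !exprMn_n in H2.
have H3 : ge (z * (x ^+ b *+ (2 * n ^ b))) (z * (x ^+ b *+ m ^ b)).
  have := geMl (z * x ^+ b) (proj2 (ge_nat _ _) hmb).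
  move=> HH; apply: (geE _ _ HH); ring.
have H4 := geT H3 H2.
have H5 : ge ((z *+ n ^ b) * (x ^+ b *+ 2)) ((z *+ n ^ b) * y ^+ b).
  by apply: (geE _ _ H4); ring.
have hZ : z *+ n ^ b != 0.
  by rewrite -mulr_natr; apply: (mul_neq0 hz); apply: nat_neq0; rewrite expn_gt0 hn.
have [c hc] := cancelZ hZ H5.
exists (c.+1 + c)%N, (b * c.+1)%N; split => //.
- by rewrite muln_gt0 hb0.
- rewrite natrM mulrA; apply: (@le_trans _ _ (2 * c.+1%:R)).
    by rewrite -natrM ler_nat; lia.
  by apply: ler_wpM2r.
- have := hc c.+1; rewrite exprMn_n -!exprM => HH.
  apply: geT HH; have hc2 : (2 ^ c.+1 * c <= 2 ^ (c.+1 + c))%N.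
    rewrite expnD leq_mul2l; apply/orP; right; apply: ltnW; exact: ltn_expl.
  have := geMl (x ^+ (b * c.+1)) (proj2 (ge_nat _ _) hc2).
  move=> HH2; apply: (geE _ _ HH2); ring.
Qed.

Lemma P4_P1 (x y : S) : x != 0 ->
  (forall eps : RR, 0 < eps ->
      exists k n : nat, [/\ (0 < k)%N, (0 < n)%N,
        k%:R <= eps * n%:R & ge ((x ^+ n) *+ (2 ^ k)) (y ^+ n)]) ->
  forall f, monotone_hom ge f -> f y <= f x.
Proof.
move=> hx P4 f hf; rewrite leNgt; apply/negP => hlt.
have hfx := hf_pos hf hx.
have [r hr] : exists r, r = f y / f x by exists (f y / f x).
have hr1 : 1 < r by rewrite hr ltr_pdivlMr // mul1r.
have hfy : f y = r * f x by rewrite hr mulfVK // gt_eqF.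
have [M [hM0 hM]] := nat_big (1 / (r - 1)).
have hMR : (0 : RR) < M%:R by rewrite ltr0n.
have hM2 : 1 < M%:R * (r - 1).
  by move: hM; rewrite ltr_pdivrMr ?subr_gt0 // mulrC.
have [k [n [hk hn hkn H]]] := P4 (1 / M%:R) ltac:(by rewrite divr_gt0).
have := hf_mono hf H; rewrite (hf_natmul hf) !(hf_exp hf) hfy exprMn natrX => Hf.
have hfxn : 0 < f x ^+ n by rewrite exprn_gt0.
have Hr : r ^+ n <= 2 ^+ k.
  by move: Hf; rewrite [_ * 2 ^+ k]mulrC ler_pM2r.
have hkM : (k * M <= n)%N.
  rewrite -(ler_nat RR) natrM; move: hkn; rewrite div1r mulrC ler_pdivlMr //.
have h1 : r ^+ (k * M) <= r ^+ n by rewrite ler_eXn2l.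
have h2 : 2 < r ^+ M.
  have := bern_lo (r - 1) M ltac:(by rewrite subr_ge0 ltW).
  have -> : 1 + (r - 1) = r by ring.
  lra.
have h3 : 2 ^+ k < (r ^+ M) ^+ k by rewrite ltrXn2r // -lt0n.
rewrite -exprM mulnC in h3.
have := lt_le_trans h3 (le_trans h1 Hr); by rewrite ltxx.
Qed.

Lemma moreover (x y : S) :
  (forall f, monotone_hom ge f -> f y < f x) ->
  exists z w : S, [/\ z != 0, w != 0 & ge (z * x + w) (z * y + w)].
Proof.
move=> H; have [hC|nC] := pselect (Ccl x y); last first.
  have [f [hf hle]] := core nC; have := H f hf; by rewrite ltNge hle.
have [z [w [hz h]]] := hC; have [w0|wn] := eqVneq w 0.
  exists z, z; split => //; rewrite w0 !addr0 in h; exact: geDr z h.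
by exists z, w.
Qed.

End Basics.

Theorem corollary2p18 (S : comPzSemiRingType) (ge : S -> S -> Prop)
  (HS : strassen_preordered ge) (x y : S) (hx : x != 0) (hy : y != 0) :
  let P1 := forall f : S -> Rdefinitions.R, monotone_hom ge f -> f y <= f x in
  let P2 := forall eps : Rdefinitions.R, 0 < eps ->
      exists m n : nat, exists z : S, [/\ (0 < m)%N, (0 < n)%N, z != 0,
        m%:R <= eps * n%:R & ge ((z * x) *+ n + z *+ m) ((z * y) *+ n)] in
  let P3 := forall eps : Rdefinitions.R, 0 < eps ->
      exists m n : nat, exists z : S, [/\ (0 < m)%N, (0 < n)%N, z != 0,
        m%:R / n%:R <= 1 + eps & ge ((z * x) *+ m) ((z * y) *+ n)] in
  let P4 := forall eps : Rdefinitions.R, 0 < eps ->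
      exists k n : nat, [/\ (0 < k)%N, (0 < n)%N,
        k%:R <= eps * n%:R & ge ((x ^+ n) *+ (2 ^ k)) (y ^+ n)] in
  [/\ P1 <-> P2, P1 <-> P3, P1 <-> P4 &
      ((forall f : S -> Rdefinitions.R, monotone_hom ge f -> f y < f x) ->
        exists z w : S, [/\ z != 0, w != 0 & ge (z * x + w) (z * y + w)])].
Proof.
move=> P1 P2 P3 P4.
have h12 : P1 -> P2 := @P1_P2 S ge HS x y.
have h21 : P2 -> P1 := @P2_P1 S ge HS x y.
have h23 : P2 -> P3 := @P2_P3 S ge HS x y hx.
have h31 : P3 -> P1 := @P3_P1 S ge HS x y hx.
have h34 : P3 -> P4 := @P3_P4 S ge HS x y.
have h41 : P4 -> P1 := @P4_P1 S ge HS x y hx.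
split; try (split; tauto).
exact: (@moreover S ge HS x y).
Qed.
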